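(* Let $i\ge 1$ and let $p_1,\dots,p_i$ be primitive elements of ${\cal H}_R$. Then $$\tilde\Delta(p_i\top\cdots\top p_1)=\sum_{j=1}^{i-1}(p_i\top\cdots\top p_{j+1})\otimes(p_j\top\cdots\top p_1).$$
   Context: A rooted tree is a finite connected and simply connected graph with a distinguished vertex (the root), edges oriented away from the root; its weight is its number of vertices. ${\cal H}_R$ is the commutative polynomial algebra over $\mathbb{Q}$ on the isomorphism classes of rooted trees; monomials are forests ($1$ is the empty forest), the weight of a forest is its total number of vertices. An admissible cut $C$ of a tree $t$ is a nonempty set of edges such that every path from the root to a vertex contains at most one edge of $C$; removing them gives a forest in which $R^C(t)$ is the tree containing the root and $P^C(t)$ the product of the others. The coproduct is the algebra morphism $\Delta$ with $\Delta(t)=1\otimes t+t\otimes 1+\sum_{C}P^C(t)\otimes R^C(t)$ (sum over admissible cuts) on trees; $\tilde\Delta(x):=\Delta(x)-1\otimes x-x\otimes 1$, and $x$ is primitive iff $\tilde\Delta(x)=0$. For forests $M,N$: $M\top N=0$ if $N=1$, and otherwise $M\top N=\frac{1}{weight(N)}\sum_{v}N_v$, where $v$ runs over the vertices of $N$ and $N_v$ is the forest obtained from $N$ by attaching every tree of $M$ to $v$ (adding an edge from $v$ to the root of each tree of $M$); $\top$ is extended bilinearly to ${\cal H}_R\times{\cal H}_R$. Iterated products are nested to the left: $p_i\top\cdots\top p_1:=(p_i\top\cdots\top p_2)\top p_1$, and $p_1$ alone for $i=1$. *)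

(* Defs.v *)
From mathcomp Require Import all_boot all_order all_algebra.
Set Implicit Arguments. Unset Strict Implicit. Unset Printing Implicit Defensive.
Import GRing.Theory Num.Theory.
Local Open Scope ring_scope.

Inductive rtree := RNode of seq rtree.
Definition forest := seq rtree.

(* A vertex of a tree is addressed by the path of child indices from the root;
   the root is [::].  A non-root vertex v also names the edge entering v. *)
Fixpoint verts (t : rtree) : seq (seq nat) :=
  let: RNode ts := t in
  [::] :: (fix go (j : nat) (ts : seq rtree) : seq (seq nat) :=
             match ts with
             | [::] => [::]
             | s :: ts' => [seq j :: p | p <- verts s] ++ go j.+1 ts'
             end) 0%N ts.

Definition weight (t : rtree) : nat := size (verts t).
Definition fweight (F : forest) : nat := \sum_(t <- F) weight t.

Fixpoint subt (t : rtree) (p : seq nat) : rtree :=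
  match p with
  | [::] => t
  | j :: p' => let: RNode ts := t in
      (fix go (j : nat) (ts : seq rtree) : rtree :=
         match ts with
         | [::] => t
         | s :: ts' => if j == 0%N then subt s p' else go j.-1 ts'
         end) j ts
  end.

(* cutat s C pre : s is the subtree located at the vertex pre; returns the
   connected component of pre after removing the edges named in C. *)
Fixpoint cutat (s : rtree) (C : seq (seq nat)) (pre : seq nat) : rtree :=
  let: RNode ts := s in
  RNode ((fix go (j : nat) (ts : seq rtree) : seq rtree :=
            match ts with
            | [::] => [::]
            | u :: ts' => if rcons pre j \in C then go j.+1 ts'
                          else cutat u C (rcons pre j) :: go j.+1 ts'
            end) 0%N ts).

Fixpoint subsets (T : Type) (s : seq T) : seq (seq T) :=
  match s with
  | [::] => [:: [::]]
  | x :: s' => let r := subsets s' in r ++ [seq x :: c | c <- r]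
  end.

(* admissible cut: every root-to-vertex path contains at most one edge of C
   (the edges on the path to w are named by the nonempty prefixes of w) *)
Definition admissible (t : rtree) (C : seq (seq nat)) : bool :=
  all (fun w => count (fun c => prefix c w) C <= 1)%N (verts t).

Definition cuts (t : rtree) : seq (seq (seq nat)) :=
  [seq C <- subsets (behead (verts t)) | (C != [::]) && admissible t C].

Definition Rcut (t : rtree) (C : seq (seq nat)) : rtree := cutat t C [::].
Definition Pcut (t : rtree) (C : seq (seq nat)) : forest :=
  [seq cutat (subt t c) C c | c <- C].

Fixpoint lexle (s t : seq bool) : bool :=
  match s, t with
  | [::], _ => true
  | _ :: _, [::] => false
  | a :: s', b :: t' => if a == b then lexle s' t' else ~~ a && b
  end.

Fixpoint code (t : rtree) : seq bool :=
  let: RNode ts := t in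
  true :: flatten (sort lexle
    ((fix go (ts : seq rtree) : seq (seq bool) :=
        match ts with [::] => [::] | s :: ts' => code s :: go ts' end) ts))
  ++ [:: false].

(* the key of a forest = its monomial in H_R (a multiset of iso classes) *)
Definition fkey (F : forest) : seq (seq bool) := sort lexle (map code F).

Definition HR := seq (rat * forest).
Definition HR2 := seq (rat * (forest * forest)).

Definition coefH (x : HR) (k : seq (seq bool)) : rat :=
  \sum_(a <- x | fkey a.2 == k) a.1.
Definition coefH2 (x : HR2) (k1 k2 : seq (seq bool)) : rat :=
  \sum_(a <- x | (fkey a.2.1 == k1) && (fkey a.2.2 == k2)) a.1.
Definition eqH2 (x y : HR2) : Prop := forall k1 k2, coefH2 x k1 k2 = coefH2 y k1 k2.

Definition tens (x y : HR) : HR2 := [seq (a.1 * b.1, (a.2, b.2)) | a <- x, b <- y].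
Definition mul2 (x y : HR2) : HR2 :=
  [seq (a.1 * b.1, (a.2.1 ++ b.2.1, a.2.2 ++ b.2.2)) | a <- x, b <- y].

Definition delta_tree (t : rtree) : HR2 :=
  (1, ([::], [:: t])) :: (1, ([:: t], [::])) ::
  [seq (1, (Pcut t C, [:: Rcut t C])) | C <- cuts t].
Definition delta_forest (F : forest) : HR2 :=
  foldr (fun t acc => mul2 (delta_tree t) acc) [:: (1, ([::], [::]))] F.
Definition delta (x : HR) : HR2 :=
  flatten [seq [seq (a.1 * c.1, c.2) | c <- delta_forest a.2] | a <- x].
Definition rdelta (x : HR) : HR2 :=
  delta x ++ [seq (- a.1, ([::], a.2)) | a <- x] ++ [seq (- a.1, (a.2, [::])) | a <- x].
Definition primitive (x : HR) : Prop := forall k1 k2, coefH2 (rdelta x) k1 k2 = 0.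

Fixpoint graft (t : rtree) (p : seq nat) (M : forest) : rtree :=
  let: RNode ts := t in
  match p with
  | [::] => RNode (ts ++ M)
  | j :: p' => RNode ((fix go (j : nat) (ts : seq rtree) : seq rtree :=
                        match ts with
                        | [::] => [::]
                        | s :: ts' => if j == 0%N then graft s p' M :: ts'
                                      else s :: go j.-1 ts'
                        end) j ts)
  end.

Definition fverts (N : forest) : seq (nat * seq nat) :=
  flatten [seq [seq (k.1, q) | q <- verts k.2] | k <- zip (iota 0 (size N)) N].
Definition graftF (N : forest) (v : nat * seq nat) (M : forest) : forest :=
  [seq if k.1 == v.1 then graft k.2 v.2 M else k.2 | k <- zip (iota 0 (size N)) N].

Definition topF (M N : forest) : HR :=
  if N is [::] then [::]
  else [seq ((fweight N)%:R^-1, graftF N v M) | v <- fverts N].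
Definition top (x y : HR) : HR :=
  flatten [seq [seq (a.1 * b.1 * c.1, c.2) | c <- topF a.2 b.2] | a <- x, b <- y].

(* itop p a n = p_(a+n) top ... top p_a, nested to the left *)
Fixpoint itop (p : nat -> HR) (a n : nat) : HR :=
  match n with
  | 0 => p a
  | n'.+1 => top (itop p a.+1 n') (p a)
  end.

(* Main.v *)
From HB Require Import structures.
Require Import Defs.
From mathcomp Require Import all_boot all_order all_algebra.
From mathcomp Require Import ring.
Set Implicit Arguments. Unset Strict Implicit. Unset Printing Implicit Defensive.
Import GRing.Theory Num.Theory.
Local Open Scope ring_scope.

Fixpoint allR (P : rtree -> Prop) (ts : seq rtree) : Prop :=
  if ts is t :: ts' then P t /\ allR P ts' else True.

Fixpoint rtree_ind2 (P : rtree -> Prop)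
  (H : forall ts, allR P ts -> P (RNode ts)) (t : rtree) : P t :=
  let: RNode ts := t in
  H ts ((fix go (ts : seq rtree) : allR P ts :=
           match ts return allR P ts with
           | [::] => I
           | t :: ts' => conj (rtree_ind2 H t) (go ts')
           end) ts).

Fixpoint enc (t : rtree) : GenTree.tree unit :=
  let: RNode ts := t in GenTree.Node 0 (map enc ts).
Fixpoint dec (t : GenTree.tree unit) : rtree :=
  match t with GenTree.Leaf _ => RNode [::] | GenTree.Node _ ts => RNode (map dec ts) end.
Lemma encK : cancel enc dec.
Proof.
elim/rtree_ind2 => ts IH /=; congr RNode; elim: ts IH => //= t ts IHts [-> H].
by rewrite IHts.
Qed.
HB.instance Definition _ := Equality.copy rtree (can_type encK).

Lemma allR_in (P : rtree -> Prop) ts : allR P ts -> forall t, t \in ts -> P t.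
Proof.
elim: ts => //= s ts IH [Ps H] t; rewrite in_cons => /orP[/eqP->//|]; exact: IH.
Qed.

Fixpoint vgo (j : nat) (ts : seq rtree) : seq (seq nat) :=
  match ts with
  | [::] => [::]
  | s :: ts' => [seq j :: p | p <- verts s] ++ vgo j.+1 ts'
  end.

Lemma vertsE ts : verts (RNode ts) = [::] :: vgo 0 ts.
Proof. rewrite /=; congr (_ :: _); elim: ts 0%N => //= s ts IH j; by rewrite IH. Qed.

Fixpoint ggo (M : forest) (p : seq nat) (j : nat) (ts : seq rtree) : seq rtree :=
  match ts with
  | [::] => [::]
  | s :: ts' => if j == 0%N then graft s p M :: ts' else s :: ggo M p j.-1 ts'
  end.

Lemma graft_cons ts j p M : graft (RNode ts) (j :: p) M = RNode (ggo M p j ts).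
Proof. rewrite /=; congr RNode; elim: ts j => //= s ts IH [|j] //=; by rewrite IH. Qed.

Definition fvertsj (j : nat) (N : forest) : seq (nat * seq nat) :=
  flatten [seq [seq (k.1, q) | q <- verts k.2] | k <- zip (iota j (size N)) N].
Definition graftFj (j : nat) (N : forest) (v : nat * seq nat) (M : forest) : forest :=
  [seq if k.1 == v.1 then graft k.2 v.2 M else k.2 | k <- zip (iota j (size N)) N].

Lemma fvertsj_cons j t N :
  fvertsj j (t :: N) = [seq (j, q) | q <- verts t] ++ fvertsj j.+1 N.
Proof. by []. Qed.

Lemma graftFj_cons j t N v M :
  graftFj j (t :: N) v M = (if j == v.1 then graft t v.2 M else t) :: graftFj j.+1 N v M.
Proof. by []. Qed.

Lemma graftFj_out j N v M : (v.1 < j)%N -> graftFj j N v M = N.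
Proof.
elim: N j => [|t N IH] j Hj; first by [].
rewrite graftFj_cons IH; last by apply: (leq_trans Hj).
have -> : (j == v.1) = false by apply/negbTE; rewrite neq_ltn Hj orbT.
by [].
Qed.

Lemma fvertsj_ge j N v : v \in fvertsj j N -> (j <= v.1)%N.
Proof.
elim: N j => //= t N IH j; rewrite fvertsj_cons mem_cat => /orP[/mapP[q _ ->]//|/IH].
exact: ltnW.
Qed.

Lemma vgo_fverts j ts : vgo j ts = [seq v.1 :: v.2 | v <- fvertsj j ts].
Proof. elim: ts j => //= s ts IH j; by rewrite fvertsj_cons map_cat -map_comp IH. Qed.

Lemma ggo_graftFj M ts j k p : (j <= k)%N -> ggo M p (k - j) ts = graftFj j ts (k, p) M.
Proof.
elim: ts j => [|s ts IH] j Hjk; first by [].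
rewrite graftFj_cons /=.
case: (ltngtP j k) Hjk => // [Hlt|<-] _.
  rewrite subn_eq0 leqNgt Hlt /=; congr (_ :: _).
  by rewrite -IH // subnS.
by rewrite subnn /= graftFj_out.
Qed.

Lemma graft_nil t p : graft t p [::] = t.
Proof.
elim/rtree_ind2: t p => ts IH [|j p].
  by rewrite /= cats0.
rewrite graft_cons; congr RNode.
elim: ts IH j => [|s ts IHts] => [_ [|j] //|[Hs H] [|j]].
  by rewrite /= Hs.
by rewrite /= IHts.
Qed.

Lemma graftFj_nil j N v : graftFj j N v [::] = N.
Proof. elim: N j => //= t N IH j; by rewrite graftFj_cons graft_nil IH if_same. Qed.

Lemma size_vgo j ts : size (vgo j ts) = (\sum_(u <- ts) weight u)%N.
Proof.
elim: ts j => [|s ts IH] j; first by rewrite big_nil.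
by rewrite big_cons /= size_cat size_map IH.
Qed.

Lemma weightE ts : weight (RNode ts) = (fweight ts).+1.
Proof. by rewrite /weight vertsE /= size_vgo. Qed.

Lemma size_fvertsj j N : size (fvertsj j N) = fweight N.
Proof.
elim: N j => [|t N IH] j; first by rewrite /fweight big_nil.
by rewrite fvertsj_cons size_cat size_map IH /fweight big_cons.
Qed.

Definition GSj (j : nat) (M N : forest) (g : forest -> rat) : rat :=
  \sum_(v <- fvertsj j N) g (graftFj j N v M).
Definition GS (M N : forest) (g : forest -> rat) : rat := GSj 0 M N g.
Definition gs (M : forest) (t : rtree) (h : rtree -> rat) : rat :=
  \sum_(v <- verts t) h (graft t v M).

Lemma GSj_nil j M g : GSj j M [::] g = 0.
Proof. by rewrite /GSj big_nil. Qed.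

Lemma GSj_cons j M t N g :
  GSj j M (t :: N) g = gs M t (fun T => g (T :: N)) + GSj j.+1 M N (fun X => g (t :: X)).
Proof.
rewrite /GSj fvertsj_cons big_cat /= big_map; congr (_ + _).
  apply: eq_bigr => q _; by rewrite graftFj_cons /= eqxx graftFj_out.
apply: eq_big_seq => v Hv; rewrite graftFj_cons.
by have := fvertsj_ge Hv; case: eqP => // <-; rewrite ltnn.
Qed.

Lemma GSj_any j k M N g : GSj j M N g = GSj k M N g.
Proof.
elim: N j k g => [|t N IH] j k g; first by rewrite !GSj_nil.
by rewrite !GSj_cons (IH j.+1 k.+1).
Qed.

Lemma GS_nil M g : GS M [::] g = 0.
Proof. exact: GSj_nil. Qed.

Lemma GS_cons M t N g :
  GS M (t :: N) g = gs M t (fun T => g (T :: N)) + GS M N (fun X => g (t :: X)).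
Proof. by rewrite /GS GSj_cons (GSj_any 1 0). Qed.

Lemma GS_ext M N g1 g2 : (forall X, g1 X = g2 X) -> GS M N g1 = GS M N g2.
Proof. by move=> H; apply: eq_bigr => v _; rewrite H. Qed.

Lemma gs_ext M t g1 g2 : (forall X, g1 X = g2 X) -> gs M t g1 = gs M t g2.
Proof. by move=> H; apply: eq_bigr => v _; rewrite H. Qed.

Lemma GS_cat M A B g :
  GS M (A ++ B) g = GS M A (fun X => g (X ++ B)) + GS M B (fun Y => g (A ++ Y)).
Proof.
elim: A g => [|t A IH] g /=; first by rewrite GS_nil add0r.
rewrite !GS_cons IH -addrA; congr (_ + _).
Qed.

Lemma gsE M ts h :
  gs M (RNode ts) h = h (RNode (ts ++ M)) + GS M ts (fun X => h (RNode X)).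
Proof.
rewrite /gs vertsE big_cons; congr (_ + _).
rewrite vgo_fverts big_map /GS /GSj; apply: eq_big_seq => v Hv.
rewrite graft_cons; case: v Hv => k p Hv /=.
by rewrite -(ggo_graftFj M ts p (leq0n k)) subn0.
Qed.

Lemma sum_const_seq (T : Type) (s : seq T) (c : rat) : \sum_(v <- s) c = c *+ size s.
Proof. elim: s => [|x s IH]; by rewrite ?big_nil ?big_cons ?IH ?mulrS. Qed.

Lemma GS_graft_nil N g : GS [::] N g = g N *+ fweight N.
Proof.
rewrite /GS /GSj.
rewrite (eq_bigr (fun _ => g N)); last by move=> v _; rewrite graftFj_nil.
by rewrite sum_const_seq size_fvertsj.
Qed.

Definition ev1 (x : HR) (g : forest -> rat) : rat := \sum_(a <- x) a.1 * g a.2.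
Definition ev2 (x : HR2) (f : forest -> forest -> rat) : rat :=
  \sum_(a <- x) a.1 * f a.2.1 a.2.2.
Definition D (F : forest) (f : forest -> forest -> rat) : rat := ev2 (delta_forest F) f.

Lemma ev2_ext x f g : (forall A B, f A B = g A B) -> ev2 x f = ev2 x g.
Proof. by move=> H; apply: eq_bigr => a _; rewrite H. Qed.
Lemma ev2D x f g : ev2 x (fun A B => f A B + g A B) = ev2 x f + ev2 x g.
Proof. by rewrite /ev2 -big_split; apply: eq_bigr => a _; rewrite mulrDr. Qed.
Lemma ev2N x f : ev2 x (fun A B => - f A B) = - ev2 x f.
Proof. by rewrite /ev2 -sumrN; apply: eq_bigr => a _; rewrite mulrN. Qed.
Lemma ev2B x f g : ev2 x (fun A B => f A B - g A B) = ev2 x f - ev2 x g.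
Proof. by rewrite ev2D ev2N. Qed.
Lemma ev2Z x c f : ev2 x (fun A B => c * f A B) = c * ev2 x f.
Proof. by rewrite /ev2 mulr_sumr; apply: eq_bigr => a _; rewrite mulrCA. Qed.
Lemma ev2_0 x : ev2 x (fun _ _ => 0) = 0.
Proof. by rewrite /ev2 big1 // => a _; rewrite mulr0. Qed.
Lemma ev2_cat x y f : ev2 (x ++ y) f = ev2 x f + ev2 y f.
Proof. by rewrite /ev2 big_cat. Qed.
Lemma ev2_mul2 x y f :
  ev2 (mul2 x y) f = ev2 x (fun a1 a2 => ev2 y (fun b1 b2 => f (a1 ++ b1) (a2 ++ b2))).
Proof.
rewrite /ev2 /mul2 big_allpairs_dep; apply: eq_bigr => a _.
rewrite mulr_sumr; apply: eq_bigr => b _ /=; by rewrite mulrA.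
Qed.
Lemma ev2_swap x y (f : forest -> forest -> forest -> forest -> rat) :
  ev2 x (fun A B => ev2 y (fun C E => f A B C E)) = ev2 y (fun C E => ev2 x (fun A B => f A B C E)).
Proof.
rewrite /ev2; under eq_bigr do rewrite mulr_sumr.
rewrite exchange_big /=; apply: eq_bigr => b _; rewrite mulr_sumr.
by apply: eq_bigr => a _; rewrite mulrCA.
Qed.
Lemma ev2_GS x M N (f : forest -> forest -> forest -> rat) :
  ev2 x (fun A B => GS M N (f A B)) = GS M N (fun Y => ev2 x (fun A B => f A B Y)).
Proof.
rewrite /ev2 /GS /GSj; under eq_bigr do rewrite mulr_sumr.
by rewrite exchange_big.
Qed.

Lemma GSD M N f g : GS M N (fun Y => f Y + g Y) = GS M N f + GS M N g.
Proof. by rewrite /GS /GSj big_split. Qed.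
Lemma GSZ M N c f : GS M N (fun Y => c * f Y) = c * GS M N f.
Proof. by rewrite /GS /GSj mulr_sumr. Qed.
Lemma GSN M N f : GS M N (fun Y => - f Y) = - GS M N f.
Proof. by rewrite /GS /GSj sumrN. Qed.
Lemma GS_0 M N : GS M N (fun _ => 0) = 0.
Proof. by rewrite /GS /GSj big1. Qed.
Lemma gsD M t f g : gs M t (fun Y => f Y + g Y) = gs M t f + gs M t g.
Proof. by rewrite /gs big_split. Qed.

Lemma D_ext F f g : (forall A B, f A B = g A B) -> D F f = D F g.
Proof. exact: ev2_ext. Qed.

Lemma D_nil f : D [::] f = f [::] [::].
Proof. by rewrite /D /ev2 /= big_cons big_nil mul1r addr0. Qed.

Lemma D_cons t F f :
  D (t :: F) f = ev2 (delta_tree t) (fun a1 a2 => D F (fun b1 b2 => f (a1 ++ b1) (a2 ++ b2))).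
Proof. by rewrite /D /= ev2_mul2. Qed.

Lemma D1 t f : D [:: t] f = ev2 (delta_tree t) f.
Proof. rewrite D_cons; apply: ev2_ext => A B; by rewrite D_nil !cats0. Qed.

Lemma D_cat A B f :
  D (A ++ B) f = D A (fun a1 a2 => D B (fun b1 b2 => f (a1 ++ b1) (a2 ++ b2))).
Proof.
elim: A f => [|t A IH] f /=; first by rewrite D_nil.
rewrite !D_cons; apply: ev2_ext => a1 a2; rewrite IH; apply: ev2_ext => c1 c2.
by apply: ev2_ext => b1 b2; rewrite !catA.
Qed.

Fixpoint cgo (C : seq (seq nat)) (pre : seq nat) (j : nat) (ts : seq rtree) : seq rtree :=
  match ts with
  | [::] => [::]
  | u :: ts' => if rcons pre j \in C then cgo C pre j.+1 ts'
                else cutat u C (rcons pre j) :: cgo C pre j.+1 ts'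
  end.

Lemma cutatE ts C pre : cutat (RNode ts) C pre = RNode (cgo C pre 0 ts).
Proof. rewrite /=; congr RNode; elim: ts 0%N => //= s ts IH j; by rewrite IH. Qed.

Lemma cutat_eq u C C' pre pre' :
  (forall q, (pre ++ q \in C) = (pre' ++ q \in C')) -> cutat u C pre = cutat u C' pre'.
Proof.
elim/rtree_ind2: u pre pre' => ts IH pre pre' H; rewrite !cutatE; congr RNode.
elim: ts IH 0%N => [|s ts IHts] => [//|[Hs Hts] j] /=.
rewrite -!cats1 H (Hs (pre ++ [:: j]) (pre' ++ [:: j])); last by move=> q; rewrite -!catA H.
by rewrite IHts.
Qed.

Lemma cutat_id u C pre :
  (forall q, q != [::] -> pre ++ q \notin C) -> cutat u C pre = u.
Proof.
elim/rtree_ind2: u pre => ts IH pre H; rewrite cutatE; congr RNode.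
elim: ts IH 0%N => [|s ts IHts] => [//|[Hs Hts] j] /=.
rewrite -!cats1 (negbTE (H _ _)) // (Hs (pre ++ [:: j])); first by rewrite IHts.
by move=> q _; rewrite -catA H.
Qed.

Fixpoint sgo (t0 : rtree) (p : seq nat) (j : nat) (ts : seq rtree) : rtree :=
  match ts with
  | [::] => t0
  | s :: ts' => if j == 0%N then subt s p else sgo t0 p j.-1 ts'
  end.

Lemma subt_sgo ts j p : subt (RNode ts) (j :: p) = sgo (RNode ts) p j ts.
Proof.
rewrite /=; move: (RNode ts) => t0.
by elim: ts j => [|s ts IH] [|j] //=.
Qed.

Lemma subt_cons ts j p :
  (j < size ts)%N -> subt (RNode ts) (j :: p) = subt (nth (RNode [::]) ts j) p.
Proof. rewrite subt_sgo; move: (RNode ts) => t0; elim: ts j => [|s ts IH] [|j] //= Hj; exact: IH. Qed.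

Lemma subsets_cat (T : Type) (s1 s2 : seq T) :
  subsets (s1 ++ s2) = [seq c1 ++ c2 | c1 <- subsets s1, c2 <- subsets s2].
Proof.
elim: s1 => [|x s1 IH] /=; first by rewrite cats0 map_id.
by rewrite IH allpairs_cat allpairs_mapl map_allpairs.
Qed.

Lemma subsets_map (T U : Type) (f : T -> U) s :
  subsets (map f s) = map (map f) (subsets s).
Proof. elim: s => [|x s IH] //=; by rewrite IH map_cat -!map_comp. Qed.

Lemma subsets_nil (T : Type) (s : seq T) :
  exists r, subsets s = [::] :: r /\ all (fun c => size c != 0%N) r.
Proof.
elim: s => [|x s [r [E H]]] /=; first by exists [::].
rewrite E /=; exists (r ++ [:: x] :: [seq x :: c | c <- r]); split => //.
by rewrite all_cat H /=; elim: r {E H}.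
Qed.

Lemma mem_subsets (T : eqType) (s c : seq T) : c \in subsets s -> {subset c <= s}.
Proof.
elim: s c => [|y s IH] c /=; first by rewrite inE => /eqP-> x.
rewrite mem_cat => /orP[/IH H x /H|/mapP[c' /IH H ->] x]; rewrite inE.
  by move->; rewrite orbT.
by rewrite inE => /orP[->//|/H->]; rewrite orbT.
Qed.

Fixpoint glue (j : nat) (Ds : seq (seq (seq nat))) : seq (seq nat) :=
  if Ds is D :: Ds' then [seq j :: d | d <- D] ++ glue j.+1 Ds' else [::].

Fixpoint tuples (ts : seq rtree) : seq (seq (seq (seq nat))) :=
  if ts is s :: ts' then [seq D :: Ds | D <- subsets (verts s), Ds <- tuples ts']
  else [:: [::]].

Lemma vgo_subsets j ts : subsets (vgo j ts) = map (glue j) (tuples ts).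
Proof.
elim: ts j => [|s ts IH] j //=.
by rewrite subsets_cat subsets_map IH allpairs_mapl allpairs_mapr map_allpairs.
Qed.

Lemma size_tuples ts Ds : Ds \in tuples ts -> size Ds = size ts.
Proof.
elim: ts Ds => [|s ts IH] Ds /=; first by rewrite inE => /eqP->.
by case/allpairsP => -[D Ds'] [_ /IH /= H ->] /=; rewrite H.
Qed.

Lemma mem_map_cons j (D : seq (seq nat)) k x :
  (k :: x \in [seq j :: d | d <- D]) = (k == j) && (x \in D).
Proof.
apply/mapP/andP => [[d Hd [-> ->]]|[/eqP-> Hx]]; first by rewrite eqxx.
by exists x.
Qed.

Lemma mem_glue j Ds k x :
  (k :: x \in glue j Ds) = (j <= k)%N && (x \in nth [::] Ds (k - j)).
Proof.
elim: Ds j => [|D Ds IH] j /=; first by rewrite nth_nil andbF.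
rewrite mem_cat mem_map_cons IH.
case: (ltngtP j k) => [Hlt|Hlt|<-] /=.
- by rewrite -(subnSK Hlt).
- by [].
- by rewrite subnn /= orbF.
Qed.

Lemma glue_head j Ds c : c \in glue j Ds -> exists k x, c = k :: x /\ (j <= k)%N.
Proof.
elim: Ds j => [|D Ds IH] j //=; rewrite mem_cat => /orP[/mapP[d _ ->]|/IH[k [x [-> H]]]].
  by exists j, d.
by exists k, x; split => //; apply: ltnW.
Qed.

Lemma vgo_head j ts c : c \in vgo j ts -> exists k x, c = k :: x /\ (j <= k)%N.
Proof.
elim: ts j => [|s ts IH] j //=; rewrite mem_cat => /orP[/mapP[d _ ->]|/IH[k [x [-> H]]]].
  by exists j, d.
by exists k, x; split => //; apply: ltnW.
Qed.

Lemma count0 (T : eqType) (P : pred T) (s : seq T) :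
  (forall x, x \in s -> ~~ P x) -> count P s = 0%N.
Proof. by move=> H; apply/eqP; rewrite -leqn0 leqNgt -has_count; apply/hasPn. Qed.

Fixpoint ADM (ts : seq rtree) (Ds : seq (seq (seq nat))) : bool :=
  match ts, Ds with
  | s :: ts', D :: Ds' => admissible s D && ADM ts' Ds'
  | [::], [::] => true
  | _, _ => false
  end.

Lemma adm_gen j ts Ds : size Ds = size ts ->
  all (fun w => count (fun c => prefix c w) (glue j Ds) <= 1)%N (vgo j ts) = ADM ts Ds.
Proof.
elim: ts Ds j => [|s ts IH] [|D Ds] j //= [Hs].
rewrite all_cat all_map.
have -> : all (fun w => count (fun c => prefix c w) ([seq j :: d | d <- D] ++ glue j.+1 Ds) <= 1)%N
            (vgo j.+1 ts) =
          all (fun w => count (fun c => prefix c w) (glue j.+1 Ds) <= 1)%N (vgo j.+1 ts).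
  apply: eq_in_all => w /vgo_head [k [x [-> Hk]]].
  rewrite count_cat (count0 (s := [seq j :: d | d <- D])) // => c /mapP [d _ ->] /=.
  by rewrite (ltn_eqF Hk).
rewrite IH //; congr (_ && _).
rewrite /admissible; apply: eq_all => q /=.
rewrite count_cat count_map.
rewrite (count0 (s := glue j.+1 Ds)); last first.
  move=> c /glue_head [k [x [-> Hk]]] /=.
  by rewrite (gtn_eqF Hk).
rewrite addn0; congr (_ <= _)%N; apply: eq_count => d /=; by rewrite eqxx.
Qed.

Lemma flatten_iota_cons (T : Type) (F : nat -> seq T) n :
  flatten [seq F i | i <- iota 0 n.+1] = F 0%N ++ flatten [seq F i.+1 | i <- iota 0 n].
Proof. by rewrite /= -(addn0 1%N) iotaDl -map_comp. Qed.

Lemma map_glue (T : Type) (F : seq nat -> T) j Ds :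
  [seq F c | c <- glue j Ds] =
  flatten [seq [seq F ((j + i)%N :: d) | d <- nth [::] Ds i] | i <- iota 0 (size Ds)].
Proof.
elim: Ds j => [|D Ds IH] j; first by [].
change (size (D :: Ds)) with (size Ds).+1.
rewrite flatten_iota_cons /= map_cat -map_comp addn0 IH; congr (_ ++ _).
by congr flatten; apply: eq_map => i /=; rewrite addSnnS.
Qed.

Lemma cgo_iota C pre j ts :
  cgo C pre j ts =
  flatten [seq (if rcons pre (j + i)%N \in C then [::]
                else [:: cutat (nth (RNode [::]) ts i) C (rcons pre (j + i)%N)]) | i <- iota 0 (size ts)].
Proof.
elim: ts j => [|s ts IH] j; first by [].
change (size (s :: ts)) with (size ts).+1.
rewrite flatten_iota_cons /= addn0 IH.
case: ifP => _ /=; [|congr (_ :: _)]; congr flatten; apply: eq_map => i /=;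
  by rewrite addSnnS.
Qed.

Definition PP (s : rtree) (D : seq (seq nat)) : forest := Pcut s D.
Definition RR (s : rtree) (D : seq (seq nat)) : forest :=
  if [::] \in D then [::] else [:: Rcut s D].

Fixpoint PF (ts : seq rtree) (Ds : seq (seq (seq nat))) : forest :=
  match ts, Ds with
  | s :: ts', D :: Ds' => PP s D ++ PF ts' Ds'
  | _, _ => [::]
  end.
Fixpoint RF (ts : seq rtree) (Ds : seq (seq (seq nat))) : forest :=
  match ts, Ds with
  | s :: ts', D :: Ds' => RR s D ++ RF ts' Ds'
  | _, _ => [::]
  end.

Lemma PF_iota ts Ds : size Ds = size ts ->
  PF ts Ds = flatten [seq PP (nth (RNode [::]) ts i) (nth [::] Ds i) | i <- iota 0 (size ts)].
Proof.
elim: ts Ds => [|s ts IH] [|D Ds] // [H].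
change (size (s :: ts)) with (size ts).+1.
by rewrite flatten_iota_cons /= IH.
Qed.

Lemma RF_iota ts Ds : size Ds = size ts ->
  RF ts Ds = flatten [seq RR (nth (RNode [::]) ts i) (nth [::] Ds i) | i <- iota 0 (size ts)].
Proof.
elim: ts Ds => [|s ts IH] [|D Ds] // [H].
change (size (s :: ts)) with (size ts).+1.
by rewrite flatten_iota_cons /= IH.
Qed.

Lemma Pcut_glue ts Ds : size Ds = size ts -> Pcut (RNode ts) (glue 0 Ds) = PF ts Ds.
Proof.
move=> Hs; rewrite PF_iota // /Pcut map_glue Hs; congr flatten.
apply/eq_in_map => i; rewrite mem_iota add0n => /andP[_ Hi].
rewrite /PP /Pcut; apply: eq_map => d.
rewrite add0n subt_cons //; apply: cutat_eq => q /=.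
by rewrite mem_glue subn0.
Qed.

Lemma Rcut_glue ts Ds : size Ds = size ts -> Rcut (RNode ts) (glue 0 Ds) = RNode (RF ts Ds).
Proof.
move=> Hs; rewrite RF_iota // /Rcut cutatE cgo_iota; congr RNode; congr flatten.
apply/eq_in_map => i; rewrite mem_iota add0n => /andP[_ Hi].
rewrite /RR /= mem_glue subn0 /=.
case: ([::] \in _) => //; congr (_ :: _).
by apply: cutat_eq => q /=; rewrite mem_glue subn0.
Qed.

Lemma adm_glue ts Ds : size Ds = size ts ->
  admissible (RNode ts) (glue 0 Ds) = ADM ts Ds.
Proof.
move=> Hs; rewrite /admissible vertsE /= adm_gen // andbC.
rewrite (count0 (s := glue 0 Ds)) ?andbT //.
by move=> c /glue_head [k [x [-> _]]].
Qed.

Lemma adm_nil t : admissible t [::].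
Proof. by rewrite /admissible; apply/allP => -[|x w] _. Qed.

Lemma adm_root t : admissible t [:: [::]].
Proof. by rewrite /admissible; apply/allP => -[|x w] _. Qed.

Lemma big_filter_ne (r : seq (seq (seq nat))) (P : pred (seq (seq nat))) (F : seq (seq nat) -> rat) :
  all (fun c => size c != 0%N) r ->
  \sum_(C <- r | (C != [::]) && P C) F C = \sum_(C <- r | P C) F C.
Proof.
elim: r => [|c r IH] /=; first by rewrite !big_nil.
case/andP => Hc Hr; rewrite !big_cons IH //.
by case: c Hc.
Qed.

Lemma ev2_delta_tree ts f :
  ev2 (delta_tree (RNode ts)) f =
  \sum_(C <- subsets (vgo 0 ts) | admissible (RNode ts) C)
     f (Pcut (RNode ts) C) [:: Rcut (RNode ts) C] + f [:: RNode ts] [::].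
Proof.
rewrite /ev2 /delta_tree !big_cons /= big_map.
rewrite /cuts vertsE [behead _]/=.
have [r [E Hr]] := subsets_nil (vgo 0 ts).
rewrite E big_filter big_cons /= big_filter_ne //.
rewrite [in RHS]big_cons adm_nil.
have -> : Rcut (RNode ts) [::] = RNode ts by rewrite /Rcut cutat_id.
have -> : Pcut (RNode ts) [::] = [::] by [].
rewrite !mul1r.
rewrite -addrA; congr (_ + _); rewrite addrC; congr (_ + _).
by apply: eq_bigr => C _; rewrite mul1r.
Qed.

Lemma nil_notin_subsets_vgo ts C : C \in subsets (vgo 0 ts) -> [::] \notin C.
Proof.
move=> HC; apply/negP => /(mem_subsets HC) /vgo_head [k [x [E _]]] //.
Qed.

Lemma T1 s f :
  \sum_(D <- subsets (verts s) | admissible s D) f (PP s D) (RR s D) = ev2 (delta_tree s) f.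
Proof.
case: s => ts; rewrite ev2_delta_tree vertsE [subsets _]/= big_cat /= big_map.
congr (_ + _).
  rewrite big_seq_cond [RHS]big_seq_cond; apply: eq_bigr => C /andP[HC _].
  by rewrite /RR (negbTE (nil_notin_subsets_vgo HC)).
have [r [E Hr]] := subsets_nil (vgo 0 ts).
rewrite E big_cons adm_root.
have -> : PP (RNode ts) [:: [::]] = [:: RNode ts].
  have -> : PP (RNode ts) [:: [::]] = [:: cutat (RNode ts) [:: [::]] [::]] by [].
  by rewrite cutat_id // => q; rewrite inE; case: q.
have -> : RR (RNode ts) [:: [::]] = [::] by [].
rewrite big_seq_cond big_pred0 ?addr0 // => C.
case HC: (C \in r) => //=.
have HCs : C \in subsets (vgo 0 ts) by rewrite E inE HC orbT.
have : size C != 0%N by move/allP: Hr => /(_ _ HC).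
case: C HC HCs => // w C' HC HCs _.
apply/negbTE/allPn; exists w.
  by rewrite vertsE inE (mem_subsets HCs) ?orbT // inE eqxx.
by rewrite /= prefix_refl; case: (w).
Qed.

Lemma TUP ts f :
  \sum_(Ds <- tuples ts | ADM ts Ds) f (PF ts Ds) (RF ts Ds) = D ts f.
Proof.
elim: ts f => [|s ts IH] f.
  by rewrite /= big_cons big_nil D_nil addr0.
rewrite D_cons -T1 /= big_mkcond big_allpairs_dep /= [RHS]big_mkcond.
apply: eq_bigr => D _; case: (admissible s D) => /=; last by rewrite big1.
rewrite -(IH (fun b1 b2 => f (PP s D ++ b1) (RR s D ++ b2))) [RHS]big_mkcond.
by [].
Qed.

Lemma R1 ts f :
  D [:: RNode ts] f = f [:: RNode ts] [::] + D ts (fun A B => f A [:: RNode B]).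
Proof.
rewrite D1 ev2_delta_tree addrC; congr (_ + _).
rewrite vgo_subsets big_map -TUP.
rewrite big_seq_cond [RHS]big_seq_cond; apply: eq_big => Ds.
  by case HD: (Ds \in tuples ts) => //=; rewrite adm_glue // (size_tuples HD).
case/andP => HD _; have Hs := size_tuples HD.
by rewrite Pcut_glue // Rcut_glue.
Qed.

Lemma lexle_total : total lexle.
Proof. move=> s; elim: s => [|a s IH] [|b t] //=; by case: a; case: b => /=; rewrite ?IH. Qed.

Lemma lexle_trans : transitive lexle.
Proof.
move=> y x z; elim: x y z => [|a x IH] [|b y] [|c z] //=.
by case: a; case: b; case: c => //=; apply: IH.
Qed.

Lemma lexle_anti : antisymmetric lexle.
Proof.
move=> x; elim: x => [|a x IH] [|b y] //=.
by case: a; case: b => //= H; rewrite (IH _ H).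
Qed.

Lemma fkeyP A B : reflect (fkey A = fkey B) (perm_eq (map code A) (map code B)).
Proof. exact: (perm_sortP lexle_total lexle_trans lexle_anti). Qed.

Lemma codeE ts : code (RNode ts) = true :: flatten (fkey ts) ++ [:: false].
Proof.
rewrite /= /fkey; congr (_ :: flatten (sort _ _) ++ _).
Qed.

Definition KI1 (g : forest -> rat) := forall A B, fkey A = fkey B -> g A = g B.
Definition KI2 (f : forest -> forest -> rat) :=
  forall A A' B B', fkey A = fkey A' -> fkey B = fkey B' -> f A B = f A' B'.
Definition KIt (h : rtree -> rat) := forall T T', code T = code T' -> h T = h T'.

Lemma fkey_cat A A' B B' : fkey A = fkey A' -> fkey B = fkey B' -> fkey (A ++ B) = fkey (A' ++ B').
Proof.
move=> /fkeyP H1 /fkeyP H2; apply/fkeyP; rewrite !map_cat.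
by rewrite (perm_cat H1 H2).
Qed.

Lemma fkey_catC A B : fkey (A ++ B) = fkey (B ++ A).
Proof. by apply/fkeyP; rewrite !map_cat perm_catC. Qed.

Lemma fkey_cons t t' F F' : code t = code t' -> fkey F = fkey F' -> fkey (t :: F) = fkey (t' :: F').
Proof. by move=> H1 /fkeyP H2; apply/fkeyP; rewrite /= H1 perm_cons. Qed.

Lemma code_RNode A B : fkey A = fkey B -> code (RNode A) = code (RNode B).
Proof. by move=> H; rewrite !codeE H. Qed.

Lemma fkey_nil A : (fkey A == [::]) = (A == [::]).
Proof. by rewrite -!size_eq0 /fkey size_sort size_map. Qed.

Fixpoint spl (n : nat) (s : seq bool) : seq bool * seq bool :=
  match s with
  | [::] => ([::], [::])
  | b :: s' =>
    if b then let p := spl n.+1 s' in (true :: p.1, p.2)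
    else match n with
         | 0 => ([::], s)
         | 1 => ([:: false], s')
         | n'.+2 => let p := spl n'.+1 s' in (false :: p.1, p.2)
         end
  end.

Lemma spl_flatten cs k z :
  (forall c, c \in cs -> forall k z, spl k.+1 (c ++ z) = (c ++ (spl k.+1 z).1, (spl k.+1 z).2)) ->
  spl k.+1 (flatten cs ++ z) = (flatten cs ++ (spl k.+1 z).1, (spl k.+1 z).2).
Proof.
elim: cs z => [|c cs IH] z H /=; first by case: (spl _ _).
rewrite -catA H ?mem_head // IH ?catA // => c' Hc'; apply: H; by rewrite inE Hc' orbT.
Qed.

Lemma spl_code t m r :
  spl m (code t ++ r) = if m is 0 then (code t, r) else (code t ++ (spl m r).1, (spl m r).2).
Proof.
elim/rtree_ind2: t m r => ts IH m r.
have Hc : forall c, c \in fkey ts -> forall k z,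
    spl k.+1 (c ++ z) = (c ++ (spl k.+1 z).1, (spl k.+1 z).2).
  move=> c; rewrite mem_sort => /mapP [u Hu ->] k z.
  by rewrite (allR_in IH Hu).
rewrite codeE /= -catA /= spl_flatten //.
by case: m => [|[|m]] /=; rewrite -?catA.
Qed.

Lemma flatten_codes_inj (s1 s2 : seq (seq bool)) :
  (forall c, c \in s1 -> exists t, c = code t) ->
  (forall c, c \in s2 -> exists t, c = code t) ->
  flatten s1 = flatten s2 -> s1 = s2.
Proof.
elim: s1 s2 => [|c1 s1 IH] [|c2 s2] //= H1 H2.
- have [[ts] ->] := H2 _ (mem_head _ _); by rewrite codeE.
- have [[ts] ->] := H1 _ (mem_head _ _); by rewrite codeE.
move=> E.
have [t1 E1] := H1 _ (mem_head _ _); have [t2 E2] := H2 _ (mem_head _ _).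
have := spl_code t1 0 (flatten s1); rewrite -E1 E E2 spl_code -E2 => -[-> Hf].
rewrite (IH s2) // => c Hc.
  by apply: H1; rewrite inE Hc orbT.
by apply: H2; rewrite inE Hc orbT.
Qed.

Lemma code_inj_children ts ts' : code (RNode ts) = code (RNode ts') -> fkey ts = fkey ts'.
Proof.
rewrite !codeE => E0.
have : flatten (fkey ts) ++ [:: false] = flatten (fkey ts') ++ [:: false] by case: E0.
rewrite !cats1 => /rcons_inj [E].
apply: flatten_codes_inj E => c; rewrite mem_sort => /mapP [u _ ->]; by exists u.
Qed.

Lemma weight_code t : weight t = count id (code t).
Proof.
elim/rtree_ind2: t => ts IH.
rewrite weightE codeE /= count_cat /= addn0 add1n; congr S.
rewrite count_flatten (perm_sumn (perm_map _ (permEl (perm_sort _ _)))) -map_comp ?addn0.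
rewrite /fweight; elim: ts IH => [|u ts IHts] => [_|[Hu H]] /=; first by rewrite big_nil.
by rewrite big_cons Hu IHts.
Qed.

Lemma fweight_code A : fweight A = sumn (map (count id) (map code A)).
Proof.
rewrite /fweight; elim: A => [|u A IH]; first by rewrite big_nil.
by rewrite big_cons IH weight_code.
Qed.

Lemma fweight_key A B : fkey A = fkey B -> fweight A = fweight B.
Proof.
move/fkeyP => H; rewrite !fweight_code; apply: perm_sumn; exact: perm_map.
Qed.

Lemma allR_all (P : rtree -> Prop) ts : (forall t, P t) -> allR P ts.
Proof. by move=> H; elim: ts => //= t ts IH; split. Qed.

Lemma fkey_mapeq A B : map code A = map code B -> fkey A = fkey B.
Proof. by rewrite /fkey => ->. Qed.

Lemma code_graft t p M1 M2 : fkey M1 = fkey M2 -> code (graft t p M1) = code (graft t p M2).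
Proof.
move=> HM; elim/rtree_ind2: t p => ts IH [|j p].
  by apply: code_RNode; apply: fkey_cat.
rewrite !graft_cons; apply: code_RNode; apply: fkey_mapeq.
elim: ts IH j => [|s ts IHts] => [//|[Hs H] [|j]] /=.
  by rewrite Hs.
by rewrite IHts.
Qed.

Lemma GS_KI_M M1 M2 N g : KI1 g -> fkey M1 = fkey M2 -> GS M1 N g = GS M2 N g.
Proof.
move=> Hg HM; apply: eq_bigr => v _; apply: Hg; apply: fkey_mapeq.
rewrite /graftFj -!map_comp; apply: eq_map => k /=.
by case: ifP => // _; rewrite (code_graft _ _ HM).
Qed.

Lemma fkey_mid X t B : fkey (X ++ t :: B) = fkey (t :: X ++ B).
Proof.
apply/fkeyP; rewrite /= !map_cat /=.
have H := perm_catCA (map code X) [:: code t] (map code B) (code t :: map code X ++ map code B).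
rewrite /= in H; by rewrite H perm_refl.
Qed.

Lemma GS_swap M A t B g : KI1 g -> GS M (A ++ t :: B) g = GS M (t :: A ++ B) g.
Proof.
move=> Hg; rewrite GS_cat !GS_cons GS_cat.
rewrite addrCA; congr (_ + (_ + _)).
- apply: gs_ext => T; apply: Hg; by rewrite fkey_mid.
- apply: GS_ext => X; apply: Hg; by rewrite fkey_mid.
- apply: GS_ext => X; apply: Hg; by rewrite fkey_mid.
Qed.

Lemma GS_inv_gen M N1 :
  allR (fun t => forall t', code t = code t' -> forall h, KIt h -> gs M t h = gs M t' h) N1 ->
  forall N2 g, KI1 g -> perm_eq (map code N1) (map code N2) -> GS M N1 g = GS M N2 g.
Proof.
elim: N1 => [|t F IH] /=.
  move=> _ N2 g _ /perm_size; case: N2 => // _.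
move=> [Ht HF] N2 g Hg Hp.
have Hin : code t \in map code N2 by rewrite -(perm_mem Hp) mem_head.
set i := index (code t) (map code N2).
have Hi : (i < size N2)%N by rewrite -(size_map code) index_mem.
set t' := nth t N2 i.
have Ht' : code t' = code t by rewrite /t' -(nth_map t (code t)) // nth_index.
have E2 : N2 = take i N2 ++ t' :: drop i.+1 N2 by rewrite /t' -drop_nth // cat_take_drop.
set A := take i N2; set B := drop i.+1 N2.
rewrite E2 GS_swap // !GS_cons.
have HpF : perm_eq (map code F) (map code (A ++ B)).
  move: Hp; rewrite {1}E2 map_cat /=.
  have H := perm_catCA (map code A) [:: code t'] (map code B).
  rewrite /= in H; rewrite perm_sym H Ht' perm_cons perm_sym.
  by rewrite map_cat.
congr (_ + _).
  rewrite (Ht t') //; last first.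
    by move=> T T' HT; apply: Hg; apply: fkey_cons => //.
  apply: gs_ext => T; apply: Hg; apply: fkey_cons => //; exact/fkeyP.
rewrite (IH HF (A ++ B)) //; last first.
  by move=> X Y HXY; apply: Hg; apply: fkey_cons.
by apply: GS_ext => X; apply: Hg; apply: fkey_cons.
Qed.

Lemma gs_inv M t : forall t', code t = code t' -> forall h, KIt h -> gs M t h = gs M t' h.
Proof.
elim/rtree_ind2: t => ts IH [ts'] Hc h Hh.
rewrite !gsE; have Hk := code_inj_children Hc.
congr (_ + _).
  by apply: Hh; apply: code_RNode; apply: fkey_cat.
apply: (GS_inv_gen IH).
  by move=> X Y HXY; apply: Hh; apply: code_RNode.
exact/fkeyP.
Qed.

Lemma GS_KI_N M N1 N2 g : KI1 g -> fkey N1 = fkey N2 -> GS M N1 g = GS M N2 g.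
Proof.
move=> Hg Hk; apply: GS_inv_gen => //; last exact/fkeyP.
apply: allR_all => t; exact: gs_inv.
Qed.

Lemma ev1_topF M N g :
  ev1 (topF M N) g = if N is [::] then 0 else (fweight N)%:R^-1 * GS M N g.
Proof.
case: N => [|t N]; first by rewrite /ev1 /topF big_nil.
by rewrite /ev1 /topF big_map /GS /GSj mulr_sumr.
Qed.

Lemma D_cons1 t F f :
  D (t :: F) f = D [:: t] (fun a1 a2 => D F (fun b1 b2 => f (a1 ++ b1) (a2 ++ b2))).
Proof. by rewrite -D_cat. Qed.

Lemma GS1 M t g : GS M [:: t] g = gs M t (fun T => g [:: T]).
Proof. by rewrite GS_cons GS_nil addr0. Qed.

Lemma fweight_cat A B : fweight (A ++ B) = (fweight A + fweight B)%N.
Proof. by rewrite /fweight big_cat. Qed.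

Lemma fweight1 t : fweight [:: t] = weight t.
Proof. by rewrite /fweight big_cons big_nil addn0. Qed.

Definition L3F (F : forest) := forall h : nat -> forest -> forest -> rat,
  D F (fun A B => h (fweight A + fweight B)%N A B) = D F (h (fweight F)).

Lemma L3F_gen F : allR (fun t => L3F [:: t]) F -> L3F F.
Proof.
elim: F => [|t F IH] /=.
  by move=> _ h; rewrite !D_nil /fweight big_nil.
move=> [Ht HF] h; rewrite !(D_cons1 t F).
have E : forall a1 a2, D F (fun b1 b2 => h (fweight (a1 ++ b1) + fweight (a2 ++ b2))%N (a1 ++ b1) (a2 ++ b2))
   = D F (fun b1 b2 => h (fweight a1 + fweight a2 + fweight F)%N (a1 ++ b1) (a2 ++ b2)).
  move=> a1 a2.
  rewrite -(IH HF (fun s b1 b2 => h (fweight a1 + fweight a2 + s)%N (a1 ++ b1) (a2 ++ b2))).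
  by apply: D_ext => b1 b2; rewrite !fweight_cat addnACA.
under D_ext => a1 a2 do rewrite E.
rewrite (Ht (fun s a1 a2 => D F (fun b1 b2 => h (s + fweight F)%N (a1 ++ b1) (a2 ++ b2)))).
by rewrite fweight1 /fweight big_cons.
Qed.

Lemma L3T t : L3F [:: t].
Proof.
elim/rtree_ind2: t => ts IH h.
have IHF := L3F_gen IH.
rewrite !R1 fweight1 /fweight big_nil addn0 -/(fweight _); congr (_ + _).
transitivity (D ts (fun A B => (fun s A B => h s.+1 A [:: RNode B]) (fweight A + fweight B)%N A B)).
  apply: D_ext => A B /=; by rewrite -/(fweight A) big_cons big_nil weightE addn0 addnS.
rewrite weightE; exact: (IHF (fun s A B => h s.+1 A [:: RNode B])).
Qed.

Lemma L3 F h : D F (fun A B => h (fweight A + fweight B)%N A B) = D F (h (fweight F)).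
Proof. apply: L3F_gen; exact: allR_all L3T. Qed.

Lemma fkey_swap12 a m b : fkey (a ++ m ++ b) = fkey (m ++ a ++ b).
Proof. by apply/fkeyP; rewrite !map_cat perm_catCA. Qed.

Lemma KI2_pre f a1 a2 : KI2 f -> KI2 (fun b1 b2 => f (a1 ++ b1) (a2 ++ b2)).
Proof. by move=> Hf A A' B B' HA HB; apply: Hf; apply: fkey_cat. Qed.

Lemma KI2_post F f : KI2 f -> KI2 (fun a1 a2 => D F (fun b1 b2 => f (a1 ++ b1) (a2 ++ b2))).
Proof. by move=> Hf A A' B B' HA HB; apply: D_ext => b1 b2; apply: Hf; apply: fkey_cat. Qed.

Lemma KI2_R f : KI2 f -> KI2 (fun A B => f A [:: RNode B]).
Proof. by move=> Hf A A' B B' HA HB; apply: Hf => //; apply: fkey_cons => //; apply: code_RNode. Qed.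

Definition Phi0 (M : forest) (f : forest -> forest -> rat) (N1 N2 : forest) : rat :=
  D M (fun M1 M2 => GS M2 N2 (fun Y => f (M1 ++ N1) Y)) + GS M N1 (fun Y => f Y N2).

Definition AFp M N := forall f, KI2 f -> GS M N (fun X => D X f) = D N (Phi0 M f).

Lemma D_0 F : D F (fun _ _ => 0) = 0.
Proof. exact: ev2_0. Qed.
Lemma DD F f g : D F (fun A B => f A B + g A B) = D F f + D F g.
Proof. exact: ev2D. Qed.
Lemma D_GS F M N (f : forest -> forest -> forest -> rat) :
  D F (fun A B => GS M N (f A B)) = GS M N (fun Y => D F (fun A B => f A B Y)).
Proof. exact: ev2_GS. Qed.
Lemma D_swap F G (f : forest -> forest -> forest -> forest -> rat) :
  D F (fun A B => D G (fun C E => f A B C E)) = D G (fun C E => D F (fun A B => f A B C E)).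
Proof. exact: ev2_swap. Qed.

Lemma AF_gen M N : allR (fun t => AFp M [:: t]) N -> AFp M N.
Proof.
elim: N => [|t F IH] /=.
  move=> _ f Hf; rewrite GS_nil D_nil /Phi0 GS_nil addr0.
  by rewrite -(D_0 M); apply: D_ext => ? ?; rewrite GS_nil.
move=> [Ht HF] f Hf.
rewrite GS_cons (D_cons1 t F).
set f' := fun a1 a2 => D F (fun b1 b2 => f (a1 ++ b1) (a2 ++ b2)).
have E1 : gs M t (fun T => D (T :: F) f) = D [:: t] (Phi0 M f').
  rewrite -(Ht f' (KI2_post F Hf)) GS1; apply: gs_ext => T.
  by rewrite (D_cons1 T F).
have E2 : GS M F (fun X => D (t :: X) f) =
          D [:: t] (fun a1 a2 => D F (Phi0 M (fun b1 b2 => f (a1 ++ b1) (a2 ++ b2)))).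
  under GS_ext => X do rewrite (D_cons1 t X).
  rewrite -D_GS; apply: D_ext => a1 a2.
  exact: (IH HF _ (KI2_pre a1 a2 Hf)).
rewrite E1 E2 -DD; apply: D_ext => a1 a2.
set T1 := D F (fun b1 b2 => D M (fun m1 m2 => GS m2 a2 (fun Y => f (m1 ++ a1 ++ b1) (Y ++ b2)))).
set T2 := D F (fun b1 b2 => D M (fun m1 m2 => GS m2 b2 (fun Y => f (m1 ++ a1 ++ b1) (a2 ++ Y)))).
set T3 := D F (fun b1 b2 => GS M a1 (fun Y => f (Y ++ b1) (a2 ++ b2))).
set T4 := D F (fun b1 b2 => GS M b1 (fun Y => f (a1 ++ Y) (a2 ++ b2))).
have R : D F (fun b1 b2 => Phi0 M f (a1 ++ b1) (a2 ++ b2)) = T1 + T2 + (T3 + T4).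
  rewrite /T1 /T2 /T3 /T4 -!DD; apply: D_ext => b1 b2.
  rewrite /Phi0 GS_cat -!DD; congr (_ + _); apply: D_ext => m1 m2.
  by rewrite GS_cat !catA.
have L1 : Phi0 M f' a1 a2 = T1 + T3.
  rewrite /Phi0 /f' /T1 /T3; congr (_ + _); last by rewrite D_GS.
  rewrite D_swap; apply: D_ext => m1 m2; rewrite D_GS; apply: GS_ext => Y.
  by apply: D_ext => b1 b2; rewrite catA.
have L2 : D F (Phi0 M (fun b1 b2 => f (a1 ++ b1) (a2 ++ b2))) = T2 + T4.
  rewrite /Phi0 /T2 /T4 -DD; apply: D_ext => b1 b2; congr (_ + _).
  apply: D_ext => m1 m2; apply: GS_ext => Y; apply: Hf => //.
  by rewrite fkey_swap12.
rewrite R L1 L2.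
by rewrite -!addrA; congr (_ + _); rewrite addrCA.
Qed.

Lemma AT M t : AFp M [:: t].
Proof.
elim/rtree_ind2: t => ts IH f Hf.
have IHF := AF_gen IH.
set fR := fun A B => f A [:: RNode B].
have HfR : KI2 fR := KI2_R Hf.
rewrite GS1 gsE !R1 (D_cat ts M).
under GS_ext => X do rewrite R1.
rewrite GSD (IHF fR HfR).
have P0 : Phi0 M f [:: RNode ts] [::] = f [:: RNode (ts ++ M)] [::] + GS M ts (fun X => f [:: RNode X] [::]).
  rewrite /Phi0 GS1 gsE.
  have -> : D M (fun M1 M2 => GS M2 [::] (fun Y => f (M1 ++ [:: RNode ts]) Y)) = 0.
    by rewrite -(D_0 M); apply: D_ext => ? ?; rewrite GS_nil.
  by rewrite add0r.
have P1 : forall A B, Phi0 M f A [:: RNode B] =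
    D M (fun m1 m2 => f (A ++ m1) [:: RNode (B ++ m2)]) + Phi0 M fR A B.
  move=> A B; rewrite /Phi0 addrA; congr (_ + _).
  rewrite -DD; apply: D_ext => m1 m2; rewrite GS1 gsE; congr (_ + _).
  by apply: Hf => //; rewrite fkey_catC.
rewrite P0.
have -> : D ts (fun A B => Phi0 M f A [:: RNode B]) =
  D ts (fun A B => D M (fun m1 m2 => f (A ++ m1) [:: RNode (B ++ m2)]) + Phi0 M fR A B).
  by apply: D_ext => A B; exact: P1.
rewrite DD.
by rewrite -!addrA; congr (_ + _); rewrite addrCA.
Qed.

Lemma AF M N f : KI2 f -> GS M N (fun X => D X f) = D N (Phi0 M f).
Proof. apply: AF_gen; apply: allR_all => t; exact: AT. Qed.

Lemma ev1_ext x f g : (forall A, f A = g A) -> ev1 x f = ev1 x g.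
Proof. by move=> H; apply: eq_bigr => a _; rewrite H. Qed.
Lemma ev1D x f g : ev1 x (fun A => f A + g A) = ev1 x f + ev1 x g.
Proof. by rewrite /ev1 -big_split; apply: eq_bigr => a _; rewrite mulrDr. Qed.
Lemma ev1N x f : ev1 x (fun A => - f A) = - ev1 x f.
Proof. by rewrite /ev1 -sumrN; apply: eq_bigr => a _; rewrite mulrN. Qed.
Lemma ev1B x f g : ev1 x (fun A => f A - g A) = ev1 x f - ev1 x g.
Proof. by rewrite ev1D ev1N. Qed.
Lemma ev1Z x c f : ev1 x (fun A => c * f A) = c * ev1 x f.
Proof. by rewrite /ev1 mulr_sumr; apply: eq_bigr => a _; rewrite mulrCA. Qed.
Lemma ev1_0 x : ev1 x (fun _ => 0) = 0.
Proof. by rewrite /ev1 big1 // => a _; rewrite mulr0. Qed.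
Lemma ev2_ev1 z y (f : forest -> forest -> forest -> rat) :
  ev2 z (fun A B => ev1 y (f A B)) = ev1 y (fun N => ev2 z (fun A B => f A B N)).
Proof.
rewrite /ev1 /ev2; under eq_bigr do rewrite mulr_sumr.
rewrite exchange_big /=; apply: eq_bigr => b _; rewrite mulr_sumr.
by apply: eq_bigr => a _; rewrite mulrCA.
Qed.

Lemma ev1_top x y g :
  ev1 (top x y) g = ev1 x (fun M => ev1 y (fun N => ev1 (topF M N) g)).
Proof.
rewrite /ev1 /top big_flatten big_allpairs_dep; apply: eq_bigr => a _.
rewrite mulr_sumr; apply: eq_bigr => b _; rewrite big_map mulr_sumr mulr_sumr.
by apply: eq_bigr => c _ /=; rewrite !mulrA.
Qed.

Lemma ev2_tens x y f : ev2 (tens x y) f = ev1 x (fun A => ev1 y (fun B => f A B)).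
Proof.
rewrite /ev2 /tens big_allpairs_dep; apply: eq_bigr => a _.
rewrite mulr_sumr; apply: eq_bigr => b _ /=; by rewrite mulrA.
Qed.

Lemma ev2_flatten (L : seq HR2) f : ev2 (flatten L) f = \sum_(z <- L) ev2 z f.
Proof. by rewrite /ev2 big_flatten. Qed.

Lemma ev2_rdelta x f : ev2 (rdelta x) f = ev1 x (fun N => D N f - f [::] N - f N [::]).
Proof.
rewrite /rdelta !ev2_cat /ev2 /delta big_flatten big_map /= !big_map !ev1B.
rewrite addrA; congr (_ + _ + _); last 2 first.
- by rewrite /ev1 -sumrN; apply: eq_bigr => a _ /=; rewrite mulNr.
- by rewrite /ev1 -sumrN; apply: eq_bigr => a _ /=; rewrite mulNr.
apply: eq_bigr => a _; rewrite big_map /D /ev2 mulr_sumr.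
by apply: eq_bigr => c _; rewrite mulrA.
Qed.

Lemma sum_if_uniq (T : eqType) (r : seq T) (x : T) (c : rat) :
  uniq r -> x \in r -> \sum_(k <- r) (if x == k then c else 0) = c.
Proof.
elim: r => [|k r IH] //= /andP[Hk Hu] Hx; rewrite big_cons.
case: (eqVneq x k) => [Exk|Nxk].
  subst x; rewrite big1_seq ?addr0 // => k' /andP[_ Hk']; case: eqP => // E.
  by move: Hk; rewrite E Hk'.
by rewrite add0r IH //; move: Hx; rewrite inE (negbTE Nxk).
Qed.

Lemma ev2_zero z f : KI2 f -> (forall k1 k2, coefH2 z k1 k2 = 0) -> ev2 z f = 0.
Proof.
move=> Hf Hz.
pose key := fun a : rat * (forest * forest) => (fkey a.2.1, fkey a.2.2).
pose ks := undup (map key z).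
have E : ev2 z f = \sum_(k <- ks) \sum_(a <- z) (if key a == k then a.1 * f a.2.1 a.2.2 else 0).
  rewrite exchange_big /ev2 big_seq [RHS]big_seq; apply: eq_bigr => a Ha.
  rewrite sum_if_uniq ?undup_uniq // mem_undup; exact: map_f.
rewrite E big1_seq // => k /andP[_ Hk].
have [a0 Ha0 Ek] : exists2 a0, a0 \in z & k = key a0 by apply/mapP; rewrite -mem_undup.
transitivity (f a0.2.1 a0.2.2 * \sum_(a <- z) (if key a == k then a.1 else 0)).
  rewrite mulr_sumr; apply: eq_bigr => a _; case: eqP => [Hka|]; last by rewrite mulr0.
  rewrite mulrC; congr (_ * _); apply: Hf; rewrite Ek in Hka.
    by case: Hka.
  by case: Hka.
rewrite -big_mkcond /=.
have := Hz k.1 k.2; rewrite /coefH2 => H.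
rewrite (eq_bigl (fun a => (fkey a.2.1 == k.1) && (fkey a.2.2 == k.2))) ?H ?mulr0 //.
Qed.

Definition ind2 (k1 k2 : seq (seq bool)) (A B : forest) : rat :=
  if (fkey A == k1) && (fkey B == k2) then 1 else 0.

Lemma ind2_KI k1 k2 : KI2 (ind2 k1 k2).
Proof. by move=> A A' B B' HA HB; rewrite /ind2 HA HB. Qed.

Lemma coefH2_ev x k1 k2 : coefH2 x k1 k2 = ev2 x (ind2 k1 k2).
Proof.
rewrite /coefH2 /ev2 big_mkcond; apply: eq_bigr => a _.
by rewrite /ind2; case: ifP => _; rewrite ?mulr1 ?mulr0.
Qed.

Lemma eqH2_ev x y : eqH2 x y -> forall f, KI2 f -> ev2 x f = ev2 y f.
Proof.
move=> H f Hf; apply/eqP; rewrite -subr_eq0; apply/eqP.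
have -> : ev2 x f - ev2 y f = ev2 (x ++ [seq (- a.1, a.2) | a <- y]) f.
  by rewrite ev2_cat /ev2 big_map -sumrN; congr (_ + _); apply: eq_bigr => a _; rewrite mulNr.
apply: ev2_zero => // k1 k2; rewrite !coefH2_ev ev2_cat.
have -> : ev2 [seq (- a.1, a.2) | a <- y] (ind2 k1 k2) = - coefH2 y k1 k2.
  by rewrite coefH2_ev /ev2 big_map -sumrN; apply: eq_bigr => a _; rewrite mulNr.
by rewrite -coefH2_ev H subrr.
Qed.

Lemma ev_eqH2 x y : (forall f, KI2 f -> ev2 x f = ev2 y f) -> eqH2 x y.
Proof. by move=> H k1 k2; rewrite !coefH2_ev H //; apply: ind2_KI. Qed.

Lemma prim_ev y f : primitive y -> KI2 f -> ev1 y (fun N => D N f - f [::] N - f N [::]) = 0.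
Proof. by move=> Hy Hf; rewrite -ev2_rdelta; apply: ev2_zero. Qed.

Lemma fweight_nil : fweight [::] = 0%N.
Proof. by rewrite /fweight big_nil. Qed.

Lemma fweight_cons t N : fweight (t :: N) = (weight t + fweight N)%N.
Proof. by rewrite /fweight big_cons. Qed.

Lemma fweight_gt0 t N : (0 < fweight (t :: N))%N.
Proof. by case: t => ts; rewrite fweight_cons weightE. Qed.

Lemma Phi0_KI Mf f : KI2 f -> KI2 (Phi0 Mf f).
Proof.
move=> Hf A A' B B' HA HB; rewrite /Phi0; congr (_ + _).
  apply: D_ext => m1 m2; rewrite (GS_KI_N _ _ HB); last by move=> X Y HXY; apply: Hf.
  by apply: GS_ext => Y; apply: Hf => //; apply: fkey_cat.
rewrite (GS_KI_N _ _ HA); last by move=> X Y HXY; apply: Hf.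
by apply: GS_ext => Y; apply: Hf.
Qed.

Definition Phi (Mf : forest) (f : forest -> forest -> rat) (A B : forest) : rat :=
  (fweight A + fweight B)%:R^-1 * Phi0 Mf f A B.

Lemma Phi_KI Mf f : KI2 f -> KI2 (Phi Mf f).
Proof.
move=> Hf A A' B B' HA HB; rewrite /Phi (fweight_key HA) (fweight_key HB).
by rewrite (@Phi0_KI Mf f Hf _ _ _ _ HA HB).
Qed.

Lemma star_point Mf f N : KI2 f ->
  ev1 (topF Mf N) (fun X => D X f - f [::] X - f X [::]) =
  (f Mf N + D Mf (fun A B => ev1 (topF B N) (f A)) - ev1 (topF Mf N) (f [::])
     - ev1 (topF [::] N) (f Mf))
  + (D N (Phi Mf f) - Phi Mf f [::] N - Phi Mf f N [::])
  - (if N is [::] then f Mf [::] else 0).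
Proof.
move=> Hf; case: N => [|t N'].
  rewrite !ev1_topF D_nil.
  have -> : D Mf (fun A B => ev1 (topF B [::]) (f A)) = 0.
    by rewrite -(D_0 Mf); apply: D_ext => A B; rewrite ev1_topF.
  have -> : Phi Mf f [::] [::] = 0 by rewrite /Phi fweight_nil invr0 mul0r.
  ring.
have E : forall B g, ev1 (topF B (t :: N')) g = (fweight (t :: N'))%:R^-1 * GS B (t :: N') g.
  by move=> B g; rewrite ev1_topF.
rewrite !E; under D_ext => A B do rewrite E.
set N := t :: N'.
set w := (fweight N)%:R : rat.
have Hw : w != 0 by rewrite pnatr_eq0 -lt0n fweight_gt0.
have -> : D Mf (fun A B => w^-1 * GS B N (f A)) = w^-1 * D Mf (fun A B => GS B N (f A)).
  exact: ev2Z.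
rewrite GS_graft_nil -mulr_natr mulrCA mulVf // mulr1.
have -> : GS Mf N (fun X => D X f - f [::] X - f X [::]) =
          D N (Phi0 Mf f) - GS Mf N (f [::]) - GS Mf N (fun X => f X [::]).
  rewrite -(AF _ _ Hf) -!GSN -!GSD; apply: GS_ext => X; by [].
have -> : D N (Phi Mf f) = w^-1 * D N (Phi0 Mf f).
  rewrite /Phi (L3 N (fun s A B => s%:R^-1 * Phi0 Mf f A B)) -/w.
  exact: ev2Z.
have -> : Phi Mf f [::] N = w^-1 * D Mf (fun A B => GS B N (f A)).
  rewrite /Phi fweight_nil add0n -/w /Phi0 GS_nil addr0; congr (_ * _).
  by apply: D_ext => m1 m2; rewrite cats0.
have -> : Phi Mf f N [::] = w^-1 * GS Mf N (fun X => f X [::]).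
  rewrite /Phi fweight_nil addn0 -/w /Phi0; congr (_ * _).
  have -> : D Mf (fun M1 M2 => GS M2 [::] (fun Y => f (M1 ++ N) Y)) = 0.
    by rewrite -(D_0 Mf); apply: D_ext => ? ?; rewrite GS_nil.
  by rewrite add0r.
ring.
Qed.

Lemma prim_nil y : primitive y -> ev1 y (fun N => if N is [::] then 1 else 0) = 0.
Proof.
move=> Hy.
pose P' := fun A B : forest => if (fweight A + fweight B == 0)%N then 1 else 0 : rat.
have HP : KI2 P' by move=> A A' B B' HA HB; rewrite /P' (fweight_key HA) (fweight_key HB).
have H := prim_ev Hy HP.
have E : forall N, D N P' - P' [::] N - P' N [::] = - (if N is [::] then 1 else 0).
  move=> N.
  have -> : D N P' = D N (fun _ _ => if (fweight N == 0)%N then 1 else 0).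
    exact: (L3 N (fun s _ _ => if (s == 0)%N then 1 else 0)).
  case: N => [|t N'].
    rewrite D_nil /P' fweight_nil /=; ring.
  have Hn : (fweight (t :: N') == 0)%N = false by apply/negbTE; rewrite -lt0n fweight_gt0.
  rewrite Hn D_0 /P' fweight_nil add0n addn0 Hn; ring.
rewrite (ev1_ext _ E) ev1N in H.
by apply/eqP; rewrite -oppr_eq0 H.
Qed.

Lemma KI2_Tr_aux (y : HR) f : KI2 f ->
  KI2 (fun A B => ev1 y (fun N => ev1 (topF B N) (f A))).
Proof.
move=> Hf A A' B B' HA HB; apply: ev1_ext => N; rewrite !ev1_topF.
case: N => // t N; congr (_ * _).
rewrite (GS_KI_M _ _ HB); last by move=> X Y HXY; apply: Hf.
by apply: GS_ext => Y; apply: Hf.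
Qed.

Lemma star_forest Mf y f : primitive y -> KI2 f ->
  ev1 y (fun N => ev1 (topF Mf N) (fun X => D X f - f [::] X - f X [::])) =
  ev1 y (fun N => f Mf N) +
  (D Mf (fun A B => ev1 y (fun N => ev1 (topF B N) (f A)))
   - ev1 y (fun N => ev1 (topF Mf N) (f [::]))
   - ev1 y (fun N => ev1 (topF [::] N) (f Mf))).
Proof.
move=> Hy Hf.
rewrite (ev1_ext _ (fun N => star_point Mf N Hf)) !ev1B ev1D.
rewrite (prim_ev Hy (Phi_KI Mf Hf)) addr0.
have -> : ev1 y (fun N => if N is [::] then f Mf [::] else 0) = 0.
  transitivity (f Mf [::] * ev1 y (fun N => if N is [::] then 1 else 0)).
    by rewrite -ev1Z; apply: ev1_ext => -[|? ?]; rewrite ?mulr1 ?mulr0.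
  by rewrite prim_nil // mulr0.
rewrite subr0 !ev1B ev1D /D ev2_ev1.
by rewrite !addrA.
Qed.

Definition Tr (y : HR) (f : forest -> forest -> rat) (A B : forest) : rat :=
  ev1 y (fun N => ev1 (topF B N) (f A)).

Lemma star M y f : primitive y -> KI2 f ->
  ev2 (rdelta (top M y)) f = ev2 (tens M y) f + ev2 (rdelta M) (Tr y f).
Proof.
move=> Hy Hf; rewrite ev2_rdelta ev1_top ev2_tens ev2_rdelta -ev1D.
by apply: ev1_ext => Mf; rewrite star_forest.
Qed.

Lemma tr_tens X Z y f : ev2 (tens X Z) (Tr y f) = ev2 (tens X (top Z y)) f.
Proof. by rewrite !ev2_tens; apply: ev1_ext => A; rewrite ev1_top. Qed.

Lemma itop_shift p a n : itop p a.+1 n = itop (fun k => p k.+1) a n.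
Proof. by elim: n a => [|n IH] a //=; rewrite IH. Qed.

Lemma main_ev n p : (forall k, (1 <= k <= n.+1)%N -> primitive (p k)) ->
  forall f, KI2 f ->
  ev2 (rdelta (itop p 1 n)) f =
  \sum_(j <- iota 1 n) ev2 (tens (itop p j.+1 (n.+1 - j.+1)) (itop p 1 j.-1)) f.
Proof.
elim: n p => [|n IH] p Hp f Hf.
  by rewrite big_nil /= ev2_rdelta (prim_ev (Hp 1%N isT) Hf).
rewrite [itop p 1 n.+1]/= star //; last exact: Hp.
rewrite (itop_shift p 1 n).
have Hp' : forall k, (1 <= k <= n.+1)%N -> primitive (p k.+1).
  by move=> k /andP[H1 H2]; apply: Hp; apply/andP; split; [by [] | exact: H2].
rewrite (IH _ Hp' _ (KI2_Tr_aux (p 1%N) Hf)).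
rewrite [iota 1 n.+1]/= big_cons !subSS subn0 /= -itop_shift; congr (_ + _).
have E : iota 2 n = map (addn 1) (iota 1 n) := iotaDl 1 1 n.
rewrite E big_map.
rewrite big_seq [RHS]big_seq; apply: eq_bigr => j; rewrite mem_iota => /andP[Hj _].
rewrite -/(Tr (p 1%N) f) tr_tens.
case: j Hj => // j _ /=.
by rewrite !itop_shift.
Qed.


Theorem lemma4p3 (i : nat) (p : nat -> HR) :
  (1 <= i)%N ->
  (forall k, (1 <= k <= i)%N -> primitive (p k)) ->
  eqH2 (rdelta (itop p 1 i.-1))
       (flatten [seq tens (itop p j.+1 (i - j.+1)) (itop p 1 j.-1) | j <- iota 1 i.-1]).
Proof.
case: i => // n _ Hp; apply: ev_eqH2 => f Hf.
by rewrite main_ev // ev2_flatten big_map.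
Qed.
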